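(* For a 2-group $\mathbb G$ the following are equivalent: (1) $\mathbb G$ is split; (2) there exist a map $s:\pi_0(\mathbb G)\to\mathrm{Ob}\,\mathcal G$ with $s[x]\in[x]$ and $s[e]=e$, and isomorphisms $\mu_{[x],[x']}:s[x]\otimes s[x']\to s[x\otimes x']$ for all $[x],[x']\in\pi_0(\mathbb G)$, such that for all $[x],[x'],[x'']$: $\mu_{[x\otimes x'],[x'']}\circ(\mu_{[x],[x']}\otimes id)\circ a_{s[x],s[x'],s[x'']}=\mu_{[x],[x'\otimes x'']}\circ(id\otimes\mu_{[x'],[x'']})$; (3) the Postnikov sequence $\mathbb 1\to\pi_1(\mathbb G)[1]\xrightarrow{\mathbb J}\mathbb G\xrightarrow{\mathbb P}\pi_0(\mathbb G)[0]\to\mathbb 1$ splits, i.e. there exists a morphism of 2-groups $\mathbb S:\pi_0(\mathbb G)[0]\to\mathbb G$ with $\mathbb P\circ\mathbb S$ isomorphic (by a monoidal natural isomorphism) to the identity of $\pi_0(\mathbb G)[0]$.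
   Context: A 2-group is a monoidal groupoid $(\mathcal G,\otimes,e,a,l,r)$ in which every object has a weak tensor inverse; morphisms of 2-groups are strong monoidal functors. $\pi_0(\mathbb G)$ is the group of isomorphism classes of objects with $[x][y]=[x\otimes y]$; $\pi_1(\mathbb G)=\mathrm{Aut}(e)$. For a group $\mathsf G$, $\mathsf G[0]$ is the discrete 2-group; for an abelian group $\mathsf A$, $\mathsf A[1]$ is the one-object 2-group with composition and tensor both the group law. $\mathbb J$ is the strict morphism including $\pi_1(\mathbb G)[1]$ as the automorphisms of $e$, and $\mathbb P$ is the strict morphism sending each object to its isomorphism class. For a group $\mathsf G$ and left $\mathsf G$-module $\mathsf A$, the elementary 2-group $\mathsf A[1]\rtimes\mathsf G[0]$ is the strict 2-group with objects the elements of $\mathsf G$, morphisms $(a,g):g\to g$, composition $(a',g)\circ(a,g)=(a'+a,g)$, tensor $g\otimes g'=gg'$, $(a,g)\otimes(a',g')=(a+g\lhd a',gg')$. A 2-group is split if it is equivalent (monoidal functor with pseudo-inverse up to monoidal natural isomorphism) to an elementary 2-group. *)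

(* Defs.v *)
From Stdlib Require Import Classical ClassicalEpsilon FunctionalExtensionality
  PropExtensionality ProofIrrelevance.

Set Implicit Arguments.

(* Data of a monoidal groupoid.  Morphisms are compared with Leibniz   *)
(* equality.  Conventions (as in the paper's coherence equation):      *)
(*   comp g f = g o f,                                                 *)
(*   assoc x y z : x (x) (y (x) z) -> (x (x) y) (x) z,                  *)
Record TwoGroupData := {
  ob : Type;
  hom : ob -> ob -> Type;
  idm : forall x, hom x x;
  comp : forall x y z, hom y z -> hom x y -> hom x z;
  tens : ob -> ob -> ob;
  tensm : forall x x' y y', hom x y -> hom x' y' -> hom (tens x x') (tens y y');
  unit : ob;
  assoc : forall x y z, hom (tens x (tens y z)) (tens (tens x y) z);
  lunit : forall x, hom (tens unit x) x;
  runit : forall x, hom (tens x unit) x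
}.

Arguments hom {t} _ _.
Arguments idm {t} _.
Arguments comp {t x y z} _ _.
Arguments tens {t} _ _.
Arguments tensm {t x x' y y'} _ _.
Arguments unit {t}.
Arguments assoc {t} _ _ _.
Arguments lunit {t} _.
Arguments runit {t} _.

Record is_2group (G : TwoGroupData) : Prop := {
  comp_id_l : forall (x y : ob G) (f : hom x y), comp (idm y) f = f;
  comp_id_r : forall (x y : ob G) (f : hom x y), comp f (idm x) = f;
  comp_assoc : forall (w x y z : ob G) (h : hom y z) (g : hom x y) (f : hom w x),
      comp h (comp g f) = comp (comp h g) f;
  groupoid : forall (x y : ob G) (f : hom x y),
      exists g : hom y x, comp g f = idm x /\ comp f g = idm y;
  tensm_id : forall x y : ob G, tensm (idm x) (idm y) = idm (tens x y);
  tensm_comp : forall (x x' y y' z z' : ob G) (g : hom y z) (g' : hom y' z')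
      (f : hom x y) (f' : hom x' y'),
      tensm (comp g f) (comp g' f') = comp (tensm g g') (tensm f f');
  assoc_nat : forall (x x' x'' y y' y'' : ob G) (f : hom x y) (f' : hom x' y')
      (f'' : hom x'' y''),
      comp (assoc y y' y'') (tensm f (tensm f' f''))
      = comp (tensm (tensm f f') f'') (assoc x x' x'');
  lunit_nat : forall (x y : ob G) (f : hom x y),
      comp (lunit y) (tensm (idm unit) f) = comp f (lunit x);
  runit_nat : forall (x y : ob G) (f : hom x y),
      comp (runit y) (tensm f (idm unit)) = comp f (runit x);
  pentagon : forall w x y z : ob G,
      comp (assoc (tens w x) y z) (assoc w x (tens y z))
      = comp (tensm (assoc w x y) (idm z))
          (comp (assoc w (tens x y) z) (tensm (idm w) (assoc x y z)));
  triangle : forall x y : ob G,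
      comp (tensm (runit x) (idm y)) (assoc x unit y) = tensm (idm x) (lunit y);
  weak_inv : forall x : ob G, exists y : ob G,
      inhabited (hom (tens x y) unit) /\ inhabited (hom (tens y x) unit)
}.

Record TwoGroup := { tg_data :> TwoGroupData; tg_laws : is_2group tg_data }.

(* Morphisms of 2-groups = strong monoidal functors.                   *)
(* (In a groupoid every morphism is invertible, so the structure maps  *)
(*  are automatically isomorphisms.)                                   *)
Record MonFunData (G H : TwoGroupData) := {
  fob : ob G -> ob H;
  fhom : forall x y : ob G, hom x y -> hom (fob x) (fob y);
  fmu : forall x y : ob G, hom (tens (fob x) (fob y)) (fob (tens x y));
  feta : hom (@unit H) (fob unit)
}.
Arguments fob {G H} _ _.
Arguments fhom {G H} _ {x y} _.
Arguments fmu {G H} _ _ _.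
Arguments feta {G H} _.

Record is_monfun (G H : TwoGroupData) (F : MonFunData G H) : Prop := {
  fhom_id : forall x : ob G, fhom F (idm x) = idm (fob F x);
  fhom_comp : forall (x y z : ob G) (g : hom y z) (f : hom x y),
      fhom F (comp g f) = comp (fhom F g) (fhom F f);
  fmu_nat : forall (x x' y y' : ob G) (f : hom x y) (f' : hom x' y'),
      comp (fmu F y y') (tensm (fhom F f) (fhom F f'))
      = comp (fhom F (tensm f f')) (fmu F x x');
  fmu_assoc : forall x y z : ob G,
      comp (fhom F (assoc x y z)) (comp (fmu F x (tens y z)) (tensm (idm (fob F x)) (fmu F y z)))
      = comp (fmu F (tens x y) z)
          (comp (tensm (fmu F x y) (idm (fob F z))) (assoc (fob F x) (fob F y) (fob F z)));
  fmu_lunit : forall x : ob G,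
      comp (fhom F (lunit x)) (comp (fmu F unit x) (tensm (feta F) (idm (fob F x))))
      = lunit (fob F x);
  fmu_runit : forall x : ob G,
      comp (fhom F (runit x)) (comp (fmu F x unit) (tensm (idm (fob F x)) (feta F)))
      = runit (fob F x)
}.

Definition Mor (G H : TwoGroupData) := { F : MonFunData G H | is_monfun F }.

Definition id_data (G : TwoGroupData) : MonFunData G G :=
  {| fob := fun x => x; fhom := fun x y f => f;
     fmu := fun x y => idm (tens x y); feta := idm unit |}.

Definition comp_data (G H K : TwoGroupData) (F : MonFunData G H) (L : MonFunData H K)
  : MonFunData G K :=
  {| fob := fun x => fob L (fob F x);
     fhom := fun x y f => fhom L (fhom F f);
     fmu := fun x y => comp (fhom L (fmu F x y)) (fmu L (fob F x) (fob F y));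
     feta := comp (fhom L (feta F)) (feta L) |}.

(* Monoidal natural transformations; in a groupoid these are automatically *)
(* monoidal natural isomorphisms.                                         *)
Definition is_monnat (G H : TwoGroupData) (F F' : MonFunData G H)
  (th : forall x : ob G, hom (fob F x) (fob F' x)) : Prop :=
  (forall (x y : ob G) (f : hom x y), comp (fhom F' f) (th x) = comp (th y) (fhom F f))
  /\ (forall x y : ob G, comp (th (tens x y)) (fmu F x y) = comp (fmu F' x y) (tensm (th x) (th y)))
  /\ comp (th unit) (feta F) = feta F'.

Definition mon_iso (G H : TwoGroupData) (F F' : MonFunData G H) : Prop :=
  exists th : forall x : ob G, hom (fob F x) (fob F' x), is_monnat F F' th.

Definition equiv2 (G H : TwoGroupData) : Prop :=
  exists (F : Mor G H) (K : Mor H G),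
    mon_iso (comp_data (proj1_sig F) (proj1_sig K)) (id_data G)
    /\ mon_iso (comp_data (proj1_sig K) (proj1_sig F)) (id_data H).

Record Group := {
  gcar : Type;
  gmul : gcar -> gcar -> gcar;
  gone : gcar;
  ginv : gcar -> gcar;
  gmulA : forall a b c, gmul a (gmul b c) = gmul (gmul a b) c;
  gmul1l : forall a, gmul gone a = a;
  gmul1r : forall a, gmul a gone = a;
  gmulVl : forall a, gmul (ginv a) a = gone;
  gmulVr : forall a, gmul a (ginv a) = gone
}.

Record GModule (Gp : Group) := {
  mcar : Type;
  madd : mcar -> mcar -> mcar;
  mzero : mcar;
  mopp : mcar -> mcar;
  maddA : forall a b c, madd a (madd b c) = madd (madd a b) c;
  maddC : forall a b, madd a b = madd b a;
  madd0 : forall a, madd a mzero = a;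
  maddN : forall a, madd a (mopp a) = mzero;
  act : gcar Gp -> mcar -> mcar;
  act_add : forall g a b, act g (madd a b) = madd (act g a) (act g b);
  act_one : forall a, act (gone Gp) a = a;
  act_mul : forall g h a, act (gmul Gp g h) a = act g (act h a)
}.
Arguments madd {Gp} _ _ _.
Arguments mzero {Gp} _.
Arguments mopp {Gp} _ _.
Arguments act {Gp} _ _ _.

Definition discrete_data (Gp : Group) : TwoGroupData :=
  {| ob := gcar Gp;
     hom := fun x y => x = y;
     idm := fun x => eq_refl;
     comp := fun x y z g f => eq_trans f g;
     tens := gmul Gp;
     tensm := fun x x' y y' f f' => f_equal2 (gmul Gp) f f';
     unit := gone Gp;
     assoc := fun x y z => gmulA Gp x y z;
     lunit := fun x => gmul1l Gp x;
     runit := fun x => gmul1r Gp x |}.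

Lemma discrete_laws (Gp : Group) : is_2group (discrete_data Gp).
Proof.
  split; intros; simpl in *; try apply proof_irrelevance.
  - exists (eq_sym f); split; apply proof_irrelevance.
  - exists (ginv Gp x); split; constructor; simpl.
    + apply gmulVr.
    + apply gmulVl.
Qed.

Definition discrete (Gp : Group) : TwoGroup :=
  {| tg_data := discrete_data Gp; tg_laws := discrete_laws Gp |}.

(* Elementary 2-group A[1] x| G[0]. Morphisms g -> h are pairs (a, proof g = h). *)
Section Elementary.
Variables (Gp : Group) (A : GModule Gp).

Definition elem_data : TwoGroupData :=
  {| ob := gcar Gp;
     hom := fun g h => (mcar A * (g = h))%type;
     idm := fun g => (mzero A, eq_refl);
     comp := fun x y z g f => (madd A (fst g) (fst f), eq_trans (snd f) (snd g));
     tens := gmul Gp;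
     tensm := fun x x' y y' f f' =>
                (madd A (fst f) (act A x (fst f')), f_equal2 (gmul Gp) (snd f) (snd f'));
     unit := gone Gp;
     assoc := fun x y z => (mzero A, gmulA Gp x y z);
     lunit := fun x => (mzero A, gmul1l Gp x);
     runit := fun x => (mzero A, gmul1r Gp x) |}.

Lemma elem_hom_ext (g h : gcar Gp) (f f' : (mcar A * (g = h))%type) :
  fst f = fst f' -> f = f'.
Proof.
  destruct f as [a e], f' as [a' e']; simpl; intros ->.
  f_equal; apply proof_irrelevance.
Qed.

Lemma m0add a : madd A (mzero A) a = a.
Proof. rewrite maddC; apply madd0. Qed.

Lemma act0 g : act A g (mzero A) = mzero A.
Proof.
  assert (H : act A g (mzero A) = madd A (act A g (mzero A)) (act A g (mzero A))).
  { rewrite <- act_add, madd0; reflexivity. }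
  assert (H2 := f_equal (fun t => madd A t (mopp A (act A g (mzero A)))) H).
  simpl in H2. rewrite maddN, <- maddA, maddN, madd0 in H2. symmetry; exact H2.
Qed.

Lemma elem_laws : is_2group elem_data.
Proof.
  split; intros; simpl.
  - apply elem_hom_ext; simpl; apply m0add.
  - apply elem_hom_ext; simpl; apply madd0.
  - apply elem_hom_ext; simpl; apply maddA.
  - destruct f as [a e]; exists (mopp A a, eq_sym e); split;
      apply elem_hom_ext; simpl; [rewrite maddC|]; apply maddN.
  - apply elem_hom_ext; simpl; rewrite act0; apply madd0.
  - apply elem_hom_ext; simpl. destruct f as [a e]; simpl; subst y.
    rewrite act_add. rewrite !maddA. f_equal. rewrite <- !maddA. f_equal.
    apply maddC.
  - apply elem_hom_ext; simpl. rewrite m0add, madd0, act_add, act_mul, maddA.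
    reflexivity.
  - apply elem_hom_ext; simpl. rewrite act_one, !m0add, madd0; reflexivity.
  - apply elem_hom_ext; simpl. rewrite act0, madd0, m0add; reflexivity.
  - apply elem_hom_ext; simpl. rewrite !act0, !madd0; reflexivity.
  - apply elem_hom_ext; simpl. rewrite !act0, !madd0; reflexivity.
  - exists (ginv Gp x); split; constructor; simpl.
    + exact (mzero A, gmulVr Gp x).
    + exact (mzero A, gmulVl Gp x).
Qed.

Definition elementary : TwoGroup :=
  {| tg_data := elem_data; tg_laws := elem_laws |}.

End Elementary.

Definition is_split (G : TwoGroupData) : Prop :=
  exists (Gp : Group) (A : GModule Gp), equiv2 G (elementary A).

(* pi_0(G): isomorphism classes of objects, as a genuine quotient:     *)
(* a class is a predicate on objects of the form [x] = {y | x ~= y}.   *)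
Section Pi0.
Variable G : TwoGroup.

Definition iso_class (x : ob G) : ob G -> Prop := fun y => inhabited (hom x y).

Definition pi0 : Type := { P : ob G -> Prop | exists x, P = iso_class x }.

Definition cls (x : ob G) : pi0 := exist _ (iso_class x) (ex_intro _ x eq_refl).

Definition in_class (y : ob G) (p : pi0) : Prop := proj1_sig p y.

Definition rep (p : pi0) : ob G :=
  proj1_sig (constructive_indefinite_description _ (proj2_sig p)).

Lemma iso_sym (x y : ob G) : inhabited (hom x y) -> inhabited (hom y x).
Proof.
  intros [f]. destruct (groupoid (tg_laws G) _ _ f) as [g _]. exact (inhabits g).
Qed.
Arguments iso_sym {x y} _.


Lemma iso_trans (x y z : ob G) :
  inhabited (hom x y) -> inhabited (hom y z) -> inhabited (hom x z).
Proof. intros [f] [g]. exact (inhabits (comp g f)). Qed.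
Arguments iso_trans {x y z} _ _.


Lemma cls_eq (x y : ob G) : inhabited (hom x y) -> cls x = cls y.
Proof.
  intros H. unfold cls. apply subset_eq_compat.
  apply functional_extensionality; intros z; apply propositional_extensionality.
  unfold iso_class; split; intros H'.
  - exact (iso_trans (iso_sym H) H').
  - exact (iso_trans H H').
Qed.
Arguments cls_eq {x y} _.


Lemma cls_eq_inv (x y : ob G) : cls x = cls y -> inhabited (hom x y).
Proof.
  intros E. assert (E' := f_equal (fun p => proj1_sig p y) E). simpl in E'.
  unfold iso_class in E'. rewrite E'. exact (inhabits (idm y)).
Qed.
Arguments cls_eq_inv {x y} _.


Lemma cls_rep (p : pi0) : cls (rep p) = p.
Proof.
  destruct p as [P H]. unfold rep; simpl.
  destruct (constructive_indefinite_description _ H) as [x Hx]; simpl.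
  unfold cls; apply subset_eq_compat. symmetry; exact Hx.
Qed.

Lemma tens_iso (x x' y y' : ob G) :
  inhabited (hom x y) -> inhabited (hom x' y') -> inhabited (hom (tens x x') (tens y y')).
Proof. intros [f] [f']. exact (inhabits (tensm f f')). Qed.
Arguments tens_iso {x x' y y'} _ _.


Definition pi0_mul (p q : pi0) : pi0 := cls (tens (rep p) (rep q)).
Definition pi0_one : pi0 := cls unit.
Definition pi0_inv (p : pi0) : pi0 :=
  cls (proj1_sig (constructive_indefinite_description _ (weak_inv (tg_laws G) (rep p)))).

Lemma pi0_mul_cls (x y : ob G) : pi0_mul (cls x) (cls y) = cls (tens x y).
Proof.
  unfold pi0_mul; apply cls_eq; apply tens_iso; apply cls_eq_inv; apply cls_rep.
Qed.

Lemma pi0_ind (Q : pi0 -> Prop) : (forall x, Q (cls x)) -> forall p, Q p.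
Proof. intros H p; rewrite <- (cls_rep p); apply H. Qed.

Lemma pi0_mulA (p q r : pi0) : pi0_mul p (pi0_mul q r) = pi0_mul (pi0_mul p q) r.
Proof.
  revert p q r; refine (pi0_ind _ _); intros x; refine (pi0_ind _ _); intros y;
  refine (pi0_ind _ _); intros z.
  rewrite !pi0_mul_cls; apply cls_eq; exact (inhabits (assoc x y z)).
Qed.

Lemma pi0_mul1l (p : pi0) : pi0_mul pi0_one p = p.
Proof.
  revert p; refine (pi0_ind _ _); intros x; unfold pi0_one; rewrite pi0_mul_cls.
  apply cls_eq; exact (inhabits (lunit x)).
Qed.

Lemma pi0_mul1r (p : pi0) : pi0_mul p pi0_one = p.
Proof.
  revert p; refine (pi0_ind _ _); intros x; unfold pi0_one; rewrite pi0_mul_cls.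
  apply cls_eq; exact (inhabits (runit x)).
Qed.

Lemma pi0_mulVl (p : pi0) : pi0_mul (pi0_inv p) p = pi0_one.
Proof.
  unfold pi0_inv.
  destruct (constructive_indefinite_description _ (weak_inv (tg_laws G) (rep p)))
    as [y [H1 H2]]; simpl.
  rewrite <- (cls_rep p). rewrite pi0_mul_cls. apply cls_eq; exact H2.
Qed.

Lemma pi0_mulVr (p : pi0) : pi0_mul p (pi0_inv p) = pi0_one.
Proof.
  unfold pi0_inv.
  destruct (constructive_indefinite_description _ (weak_inv (tg_laws G) (rep p)))
    as [y [H1 H2]]; simpl.
  rewrite <- (cls_rep p). rewrite pi0_mul_cls. apply cls_eq; exact H1.
Qed.

Definition pi0grp : Group :=
  {| gcar := pi0; gmul := pi0_mul; gone := pi0_one; ginv := pi0_inv;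
     gmulA := pi0_mulA; gmul1l := pi0_mul1l; gmul1r := pi0_mul1r;
     gmulVl := pi0_mulVl; gmulVr := pi0_mulVr |}.

Definition P_data : MonFunData G (discrete pi0grp) :=
  {| fob := fun x : ob G => (cls x : ob (discrete pi0grp));
     fhom := fun x y f => cls_eq (inhabits f);
     fmu := fun x y => pi0_mul_cls x y;
     feta := eq_refl |}.

End Pi0.

Definition eq_hom (G : TwoGroupData) (x y : ob G) (E : x = y) : hom x y :=
  match E in _ = y' return hom x y' with eq_refl => idm x end.

Definition has_coherent_section (G : TwoGroup) : Prop :=
  exists (s : pi0 G -> ob G)
         (mu : forall p q : pi0 G, hom (tens (s p) (s q)) (s (pi0_mul p q))),
    (forall p, in_class (s p) p)
    /\ s (cls G unit) = unit
    /\ forall p q r : pi0 G,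
         comp (mu (pi0_mul p q) r) (comp (tensm (mu p q) (idm (s r))) (assoc (s p) (s q) (s r)))
         = comp (@eq_hom G _ _ (f_equal s (pi0_mulA p q r)))
             (comp (mu p (pi0_mul q r)) (tensm (idm (s p)) (mu q r))).

Definition postnikov_splits (G : TwoGroup) : Prop :=
  exists S : Mor (discrete (pi0grp G)) G,
    mon_iso (comp_data (proj1_sig S) (P_data G)) (id_data _).

(* Main.v *)
Require Import Defs.
From Stdlib Require Import Classical ClassicalEpsilon FunctionalExtensionality
  PropExtensionality ProofIrrelevance.

Notation "g ∘ f" := (comp g f) (at level 40, left associativity).
Notation "f ⊗ g" := (tensm f g) (at level 35).

Section Basics.
Context {G : TwoGroup}.

Lemma cidl {x y : ob G} (f : hom x y) : idm y ∘ f = f.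
Proof. apply (comp_id_l (tg_laws G)). Qed.
Lemma cidr {x y : ob G} (f : hom x y) : f ∘ idm x = f.
Proof. apply (comp_id_r (tg_laws G)). Qed.
Lemma cA {w x y z : ob G} (h : hom y z) (g : hom x y) (f : hom w x) :
  h ∘ (g ∘ f) = (h ∘ g) ∘ f.
Proof. apply (comp_assoc (tg_laws G)). Qed.
Lemma tid (x y : ob G) : idm x ⊗ idm y = idm (tens x y).
Proof. apply (tensm_id (tg_laws G)). Qed.
Lemma tc {x x' y y' z z' : ob G} (g : hom y z) (g' : hom y' z') (f : hom x y) (f' : hom x' y') :
  (g ∘ f) ⊗ (g' ∘ f') = (g ⊗ g') ∘ (f ⊗ f').
Proof. apply (tensm_comp (tg_laws G)). Qed.
Lemma anat {x x' x'' y y' y'' : ob G} (f : hom x y) (f' : hom x' y') (f'' : hom x'' y'') :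
  assoc y y' y'' ∘ (f ⊗ (f' ⊗ f'')) = ((f ⊗ f') ⊗ f'') ∘ assoc x x' x''.
Proof. apply (assoc_nat (tg_laws G)). Qed.
Lemma lnat {x y : ob G} (f : hom x y) : lunit y ∘ (idm unit ⊗ f) = f ∘ lunit x.
Proof. apply (lunit_nat (tg_laws G)). Qed.
Lemma rnat {x y : ob G} (f : hom x y) : runit y ∘ (f ⊗ idm unit) = f ∘ runit x.
Proof. apply (runit_nat (tg_laws G)). Qed.
Lemma pent (w x y z : ob G) :
  assoc (tens w x) y z ∘ assoc w x (tens y z)
  = (assoc w x y ⊗ idm z) ∘ (assoc w (tens x y) z ∘ (idm w ⊗ assoc x y z)).
Proof. apply (pentagon (tg_laws G)). Qed.
Lemma tri (x y : ob G) : (runit x ⊗ idm y) ∘ assoc x unit y = idm x ⊗ lunit y.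
Proof. apply (triangle (tg_laws G)). Qed.

Definition inv {x y : ob G} (f : hom x y) : hom y x :=
  proj1_sig (constructive_indefinite_description _ (groupoid (tg_laws G) x y f)).
Lemma invl {x y : ob G} (f : hom x y) : inv f ∘ f = idm x.
Proof. unfold inv; destruct constructive_indefinite_description as [g [H1 H2]]; exact H1. Qed.
Lemma invr {x y : ob G} (f : hom x y) : f ∘ inv f = idm y.
Proof. unfold inv; destruct constructive_indefinite_description as [g [H1 H2]]; exact H2. Qed.

Lemma invlK {x y z : ob G} (f : hom x y) (g : hom z x) : inv f ∘ (f ∘ g) = g.
Proof. rewrite cA, invl, cidl; reflexivity. Qed.
Lemma invrK {x y z : ob G} (f : hom x y) (g : hom z y) : f ∘ (inv f ∘ g) = g.
Proof. rewrite cA, invr, cidl; reflexivity. Qed.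

Lemma canc_l {x y z : ob G} (f : hom y z) (g h : hom x y) : f ∘ g = f ∘ h -> g = h.
Proof. intros H. rewrite <- (invlK f g), H, invlK. reflexivity. Qed.
Lemma canc_r {x y z : ob G} (f : hom x y) (g h : hom y z) : g ∘ f = h ∘ f -> g = h.
Proof. intros H. rewrite <- (cidr g), <- (cidr h), <- (invr f), !cA, H. reflexivity. Qed.

Lemma inv_uniq {x y : ob G} (f : hom x y) (g : hom y x) : g ∘ f = idm x -> g = inv f.
Proof. intros H. apply (canc_r f). rewrite H, invl. reflexivity. Qed.
Lemma inv_uniq' {x y : ob G} (f : hom x y) (g : hom y x) : f ∘ g = idm y -> g = inv f.
Proof. intros H. apply (canc_l f). rewrite H, invr. reflexivity. Qed.
Lemma inv_inv {x y : ob G} (f : hom x y) : inv (inv f) = f.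
Proof. symmetry. apply inv_uniq. apply invr. Qed.
Lemma inv_comp {x y z : ob G} (g : hom y z) (f : hom x y) : inv (g ∘ f) = inv f ∘ inv g.
Proof. symmetry. apply inv_uniq. rewrite <- cA, (cA (inv g)), invl, cidl, invl. reflexivity. Qed.
Lemma inv_id (x : ob G) : inv (idm x) = idm x.
Proof. symmetry. apply inv_uniq. apply cidl. Qed.
Lemma inv_t {x x' y y' : ob G} (f : hom x y) (f' : hom x' y') : inv (f ⊗ f') = inv f ⊗ inv f'.
Proof. symmetry. apply inv_uniq. rewrite <- tc, !invl, tid. reflexivity. Qed.

Lemma inv_t1 {x y : ob G} (f : hom x y) z : inv f ⊗ idm z = inv (f ⊗ idm z).
Proof. rewrite inv_t, inv_id. reflexivity. Qed.
Lemma inv_t2 {x y : ob G} (f : hom x y) z : idm z ⊗ inv f = inv (idm z ⊗ f).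
Proof. rewrite inv_t, inv_id. reflexivity. Qed.
Lemma mv_l {x y z : ob G} (f : hom y z) (g : hom x y) (h : hom x z) : g = inv f ∘ h -> f ∘ g = h.
Proof. intros ->. apply invrK. Qed.
Lemma mv_r {x y z : ob G} (f : hom x y) (g : hom y z) (h : hom x z) : g = h ∘ inv f -> g ∘ f = h.
Proof. intros ->. rewrite <- cA, invl, cidr. reflexivity. Qed.

Lemma slide1 {x x' y y' : ob G} (f : hom x y) (g : hom x' y') :
  (f ⊗ idm y') ∘ (idm x ⊗ g) = f ⊗ g.
Proof. rewrite <- tc, cidl, cidr. reflexivity. Qed.
Lemma slide2 {x x' y y' : ob G} (f : hom x y) (g : hom x' y') :
  (idm y ⊗ g) ∘ (f ⊗ idm x') = f ⊗ g.
Proof. rewrite <- tc, cidl, cidr. reflexivity. Qed.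
Lemma tc1 {x y z w : ob G} (g : hom y z) (f : hom x y) : (g ∘ f) ⊗ idm w = (g ⊗ idm w) ∘ (f ⊗ idm w).
Proof. rewrite <- tc, cidl. reflexivity. Qed.
Lemma tc2 {x y z w : ob G} (g : hom y z) (f : hom x y) : idm w ⊗ (g ∘ f) = (idm w ⊗ g) ∘ (idm w ⊗ f).
Proof. rewrite <- tc, cidl. reflexivity. Qed.

Lemma faithR {x y : ob G} (f g : hom x y) : f ⊗ idm unit = g ⊗ idm unit -> f = g.
Proof.
  intros H. apply (canc_r (runit x)). rewrite <- !rnat, H. reflexivity.
Qed.
Lemma faithL {x y : ob G} (f g : hom x y) : idm unit ⊗ f = idm unit ⊗ g -> f = g.
Proof.
  intros H. apply (canc_r (lunit x)). rewrite <- !lnat, H. reflexivity.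
Qed.

Lemma lunitI (x : ob G) : idm unit ⊗ lunit x = lunit (tens unit x).
Proof. apply (canc_l (lunit x)). rewrite lnat. reflexivity. Qed.
Lemma runitI (x : ob G) : runit x ⊗ idm unit = runit (tens x unit).
Proof. apply (canc_l (runit x)). rewrite rnat. reflexivity. Qed.

Lemma kelly1 (x y : ob G) : lunit (tens x y) = (lunit x ⊗ idm y) ∘ assoc unit x y.
Proof.
  apply faithL. apply (canc_l (assoc unit x y)).
  rewrite <- tri.
  rewrite cA, <- (tid x y), anat.
  rewrite <- cA, pent, !cA, <- tc1, tri.
  rewrite <- anat, <- cA, <- tc2. reflexivity.
Qed.

Lemma kelly2 (x y : ob G) : runit (tens x y) ∘ assoc x y unit = idm x ⊗ runit y.
Proof.
  apply faithR.
  apply (canc_r ((assoc x (tens y unit) unit) ∘ (idm x ⊗ assoc y unit unit))).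
  rewrite tc1, <- !cA, <- pent, cA, tri, <- (tid x y), <- anat.
  rewrite cA, <- anat, <- cA, <- tc2, tri. reflexivity.
Qed.

Lemma kelly3 : lunit (@unit G) = runit unit.
Proof.
  apply faithR. apply (canc_r (assoc unit unit unit)).
  rewrite tri, <- kelly1, lunitI. reflexivity.
Qed.


Lemma lnat_inv {x y : ob G} (f : hom x y) : inv (lunit y) ∘ f = (idm unit ⊗ f) ∘ inv (lunit x).
Proof. apply mv_l. rewrite inv_inv, cA, lnat, <- cA, invr, cidr. reflexivity. Qed.
Lemma rnat_inv {x y : ob G} (f : hom x y) : inv (runit y) ∘ f = (f ⊗ idm unit) ∘ inv (runit x).
Proof. apply mv_l. rewrite inv_inv, cA, rnat, <- cA, invr, cidr. reflexivity. Qed.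

Definition Lr (x : ob G) (a : hom unit unit) : hom x x := lunit x ∘ (a ⊗ idm x) ∘ inv (lunit x).
Definition Rr (x : ob G) (a : hom unit unit) : hom x x := runit x ∘ (idm x ⊗ a) ∘ inv (runit x).

Lemma L_id x : Lr x (idm unit) = idm x.
Proof. unfold Lr. rewrite tid, cidr, invr. reflexivity. Qed.
Lemma R_id x : Rr x (idm unit) = idm x.
Proof. unfold Rr. rewrite tid, cidr, invr. reflexivity. Qed.
Lemma L_comp x a b : Lr x (a ∘ b) = Lr x a ∘ Lr x b.
Proof. unfold Lr. rewrite tc1, <- !cA, invlK. reflexivity. Qed.
Lemma R_comp x a b : Rr x (a ∘ b) = Rr x a ∘ Rr x b.
Proof. unfold Rr. rewrite tc2, <- !cA, invlK. reflexivity. Qed.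
Lemma L_nat {x w : ob G} (h : hom x w) a : h ∘ Lr x a = Lr w a ∘ h.
Proof.
  unfold Lr. rewrite <- !cA, lnat_inv, (cA (a ⊗ idm w)), slide1, <- (slide2 a h).
  rewrite !cA, lnat. reflexivity.
Qed.
Lemma R_nat {x w : ob G} (h : hom x w) a : h ∘ Rr x a = Rr w a ∘ h.
Proof.
  unfold Rr. rewrite <- !cA, rnat_inv, (cA (idm w ⊗ a)), slide2, <- (slide1 h a).
  rewrite !cA, rnat. reflexivity.
Qed.

Lemma kelly1' (x y : ob G) : lunit x ⊗ idm y = lunit (tens x y) ∘ inv (assoc unit x y).
Proof. rewrite kelly1, <- cA, invr, cidr. reflexivity. Qed.

Lemma L_tens x y a : Lr x a ⊗ idm y = Lr (tens x y) a.
Proof.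
  unfold Lr. rewrite !tc1, (inv_t1 (lunit x)), kelly1', inv_comp, inv_inv.
  rewrite <- !cA. f_equal. f_equal. rewrite (cA (tensm (tensm a (idm x)) (idm y))), <- anat, tid.
  rewrite !cA, invl, cidl. reflexivity.
Qed.

Lemma tri' (x y : ob G) : idm x ⊗ lunit y ∘ inv (assoc x unit y) = runit x ⊗ idm y.
Proof. rewrite <- tri, <- cA, invr, cidr. reflexivity. Qed.

Lemma L_slide x y a : idm x ⊗ Lr y a = Rr x a ⊗ idm y.
Proof.
  unfold Lr, Rr. rewrite !tc2, !tc1, (inv_t2 (lunit y)), (inv_t1 (runit x)), <- !tri'.
  rewrite inv_comp, inv_inv, <- !cA. f_equal.
  rewrite (cA (tensm (tensm (idm x) a) (idm y))), <- anat.
  rewrite !cA, invl, cidl. reflexivity.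
Qed.

Lemma kelly2' (x y : ob G) : runit (tens x y) = (idm x ⊗ runit y) ∘ inv (assoc x y unit).
Proof. rewrite <- kelly2, <- cA, invr, cidr. reflexivity. Qed.

Lemma R_tens x y a : Rr (tens x y) a = idm x ⊗ Rr y a.
Proof.
  unfold Rr. rewrite !tc2, kelly2', inv_comp, inv_inv, inv_t, inv_id.
  rewrite <- !cA. f_equal. rewrite (cA (tensm (idm (tens x y)) a)), <- (tid x y), <- anat.
  rewrite !cA, invl, cidl. reflexivity.
Qed.

Lemma L_I a : Lr unit a = a.
Proof. unfold Lr. rewrite kelly3, rnat, <- cA, invr, cidr. reflexivity. Qed.
Lemma R_I a : Rr unit a = a.
Proof. unfold Rr. rewrite <- kelly3, lnat, <- cA, invr, cidr. reflexivity. Qed.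

Lemma EH (a b : hom (@unit G) unit) : a ∘ b = b ∘ a.
Proof.
  assert (Ha : a = lunit unit ∘ (a ⊗ idm unit) ∘ inv (lunit unit)) by (symmetry; apply L_I).
  assert (Hb : b = lunit unit ∘ (idm unit ⊗ b) ∘ inv (lunit unit)).
  { rewrite <- (R_I b) at 1. unfold Rr. rewrite kelly3. reflexivity. }
  transitivity (lunit unit ∘ (a ⊗ b) ∘ inv (lunit unit)).
  - rewrite Ha at 1. rewrite Hb at 1. rewrite <- !cA. rewrite (invlK (lunit unit)). rewrite (cA (a ⊗ idm unit)), slide1. reflexivity.
  - rewrite Ha at 2. rewrite Hb at 2. rewrite <- !cA, (invlK (lunit unit)), (cA (idm unit ⊗ b)), slide2. reflexivity.
Qed.


Lemma tid_transfer' {u v z w : ob G} (f : hom u v) (psi : hom z w) :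
  f ⊗ idm z = inv (idm v ⊗ psi) ∘ (f ⊗ idm w) ∘ (idm u ⊗ psi).
Proof. rewrite <- cA, slide1, <- (slide2 f psi), invlK. reflexivity. Qed.

Lemma tid_assoc {p q : ob G} (f : hom p q) z u :
  f ⊗ idm (tens z u) = inv (assoc q z u) ∘ ((f ⊗ idm z) ⊗ idm u) ∘ assoc p z u.
Proof. rewrite <- cA, <- anat, tid, invlK. reflexivity. Qed.
Lemma tid_assoc' {p q : ob G} (f : hom p q) z u :
  (f ⊗ idm z) ⊗ idm u = assoc q z u ∘ (f ⊗ idm (tens z u)) ∘ inv (assoc p z u).
Proof. rewrite <- (tid z u), anat, <- cA, invr, cidr. reflexivity. Qed.

Lemma faithT (z w : ob G) : inhabited (hom (tens z w) unit) ->
  forall (u v : ob G) (f g : hom u v), f ⊗ idm z = g ⊗ idm z -> f = g.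
Proof.
  intros [phi] u v f g H. apply faithR.
  rewrite (tid_transfer' f (inv phi)), (tid_transfer' g (inv phi)).
  rewrite (tid_assoc f), (tid_assoc g), H. reflexivity.
Qed.

Lemma fullT (z w : ob G) : inhabited (hom (tens z w) unit) -> inhabited (hom (tens w z) unit) ->
  forall (u v : ob G) (c : hom (tens u z) (tens v z)), exists f : hom u v, f ⊗ idm z = c.
Proof.
  intros [phi] Hwz u v c.
  set (d := inv (assoc v z w) ∘ (c ⊗ idm w) ∘ assoc u z w).
  set (e := (idm v ⊗ phi) ∘ d ∘ inv (idm u ⊗ phi)).
  exists (runit v ∘ e ∘ inv (runit u)).
  apply (faithT w z Hwz).
  rewrite tid_assoc'.
  rewrite (tid_transfer' _ phi).
  assert (He : (runit v ∘ e ∘ inv (runit u)) ⊗ idm unit = e).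
  { apply (canc_l (runit v)). rewrite rnat, <- cA, invl, cidr. reflexivity. }
  rewrite He. unfold e, d. rewrite <- !cA, !invlK, invrK, invr, cidr. reflexivity.

Qed.

Lemma L_inj x a b : Lr x a = Lr x b -> a = b.
Proof.
  intros H. destruct (weak_inv (tg_laws G) x) as [y [H1 H2]].
  apply (faithT x y H1). unfold Lr in H.
  apply (canc_l (lunit x)). apply (canc_r (inv (lunit x))). exact H.
Qed.

Lemma L_surj x (c : hom x x) : exists a, Lr x a = c.
Proof.
  destruct (weak_inv (tg_laws G) x) as [y [H1 H2]].
  destruct (fullT x y H1 H2 unit unit (inv (lunit x) ∘ c ∘ lunit x)) as [a Ha].
  exists a. unfold Lr. rewrite Ha, <- !cA, invrK, invr, cidr. reflexivity.
Qed.

Definition Linv x (c : hom x x) : hom (@unit G) unit :=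
  proj1_sig (constructive_indefinite_description _ (L_surj x c)).
Lemma L_Linv x c : Lr x (Linv x c) = c.
Proof. unfold Linv. destruct constructive_indefinite_description. assumption. Qed.
Lemma Linv_L x a : Linv x (Lr x a) = a.
Proof. apply (L_inj x). apply L_Linv. Qed.

Definition trg (x : ob G) (a : hom (@unit G) unit) : hom (@unit G) unit := Linv x (Rr x a).
Lemma tri_spec x a : Lr x (trg x a) = Rr x a.
Proof. apply L_Linv. Qed.
Lemma tri_iso {x w : ob G} (h : hom x w) a : trg x a = trg w a.
Proof.
  apply (L_inj w). rewrite tri_spec. apply (canc_r h). rewrite <- L_nat, <- R_nat, tri_spec. reflexivity.
Qed.
Lemma tri_comp x a b : trg x (a ∘ b) = trg x a ∘ trg x b.
Proof. apply (L_inj x). rewrite L_comp, !tri_spec, R_comp. reflexivity. Qed.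
Lemma tri_unit a : trg unit a = a.
Proof. apply (L_inj unit). rewrite tri_spec, L_I, R_I. reflexivity. Qed.
Lemma tri_tens x y a : trg (tens x y) a = trg x (trg y a).
Proof.
  apply (L_inj (tens x y)). rewrite tri_spec, <- L_tens, tri_spec, <- L_slide, tri_spec, R_tens.
  reflexivity.
Qed.

Local Notation eqh E := (@eq_hom (tg_data G) _ _ E).
Lemma eq_hom_pi {x y : ob G} (E1 E2 : x = y) : eqh E1 = eqh E2.
Proof. rewrite (proof_irrelevance _ E1 E2). reflexivity. Qed.
Lemma eq_hom_trans {x y z : ob G} (E1 : x = y) (E2 : y = z) :
  eqh (eq_trans E1 E2) = eqh E2 ∘ eqh E1.
Proof. destruct E2, E1. simpl. rewrite cidl. reflexivity. Qed.
Lemma eq_hom_sym {x y : ob G} (E : x = y) : eqh (eq_sym E) = inv (eqh E).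
Proof. apply inv_uniq. destruct E. simpl. apply cidl. Qed.
Lemma eq_hom_comp {x y z : ob G} (E1 : x = y) (E2 : y = z) (E3 : x = z) :
  eqh E2 ∘ eqh E1 = eqh E3.
Proof. rewrite <- eq_hom_trans. apply eq_hom_pi. Qed.
Lemma eq_hom_id {x : ob G} (E : x = x) : eqh E = idm x.
Proof. rewrite (eq_hom_pi E eq_refl). reflexivity. Qed.

End Basics.
Ltac sh := match goal with |- ?g => idtac g end.

Lemma tcm {G : TwoGroup} {x x' y y' z z' : ob G} (g : hom y z) (g' : hom y' z') (f : hom x y) (f' : hom x' y') :
  (g ⊗ g') ∘ (f ⊗ f') = (g ∘ f) ⊗ (g' ∘ f').
Proof. rewrite tc. reflexivity. Qed.
Lemma tcK {G : TwoGroup} {w x x' y y' z z' : ob G} (g : hom y z) (g' : hom y' z') (f : hom x y) (f' : hom x' y')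
  (k : hom w (tens x x')) :
  (g ⊗ g') ∘ ((f ⊗ f') ∘ k) = ((g ∘ f) ⊗ (g' ∘ f')) ∘ k.
Proof. rewrite tc, cA. reflexivity. Qed.
Lemma invlK' {G : TwoGroup} {x y : ob G} (f : hom x y) : inv f ∘ f = idm x.
Proof. apply invl. Qed.

Ltac norm := repeat progress (rewrite ?inv_comp, ?inv_t, ?inv_inv, ?inv_id, <- ?cA,
  ?invlK, ?invrK, ?invl, ?invr, ?cidl, ?cidr, ?tcK, ?tcm, ?tid).

Section MonFun.
Context {G H : TwoGroup} (L : MonFunData G H) (HL : is_monfun L).

Lemma fmu_nat1 {x y : ob G} (f : hom x y) (x' : ob G) :
  fmu L y x' ∘ (fhom L f ⊗ idm (fob L x')) = fhom L (f ⊗ idm x') ∘ fmu L x x'.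
Proof. rewrite <- (fhom_id HL x'), (fmu_nat HL). reflexivity. Qed.
Lemma fmu_nat2 {x' y' : ob G} (f : hom x' y') (x : ob G) :
  fmu L x y' ∘ (idm (fob L x) ⊗ fhom L f) = fhom L (idm x ⊗ f) ∘ fmu L x x'.
Proof. rewrite <- (fhom_id HL x), (fmu_nat HL). reflexivity. Qed.
End MonFun.

Section CompMon.
Context {G H K : TwoGroup} (F : MonFunData G H) (L : MonFunData H K)
  (HF : is_monfun F) (HL : is_monfun L).

Lemma comp_monfun : is_monfun (comp_data F L).
Proof.
  split; simpl; intros.
  - rewrite (fhom_id HF), (fhom_id HL). reflexivity.
  - rewrite (fhom_comp HF), (fhom_comp HL). reflexivity.
  - rewrite <- cA, (fmu_nat HL), cA, <- (fhom_comp HL), (fmu_nat HF), (fhom_comp HL), <- cA.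
    reflexivity.
  - rewrite tc2, tc1, <- !cA.
    rewrite (cA (fmu L _ _) (idm _ ⊗ _)), (fmu_nat2 _ HL).
    rewrite !cA, <- !(fhom_comp HL). rewrite <- (cA (fhom F _)), (fmu_assoc HF), !(fhom_comp HL), <- !cA.
    rewrite (fmu_assoc HL), !cA. f_equal. rewrite <- !cA. f_equal.
    rewrite !cA. rewrite (fmu_nat1 _ HL). reflexivity.
  - rewrite tc1, <- !cA, (cA (fmu L _ _) (fhom L _ ⊗ _)), (fmu_nat1 _ HL).
    rewrite !cA, <- !(fhom_comp HL), <- (cA (fhom F _)), (fmu_lunit HF), <- (cA (fhom L _)), (fmu_lunit HL). reflexivity.
  - rewrite tc2, <- !cA, (cA (fmu L _ _) (_ ⊗ fhom L _)), (fmu_nat2 _ HL).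
    rewrite !cA, <- !(fhom_comp HL), <- (cA (fhom F _)), (fmu_runit HF), <- (cA (fhom L _)), (fmu_runit HL). reflexivity.
Qed.
End CompMon.

Section Equiv.
Context {E G : TwoGroup} (K : MonFunData E G) (HK : is_monfun K)
  (Kinv : forall a b, hom (fob K a) (fob K b) -> hom a b)
  (KKinv : forall a b (h : hom (fob K a) (fob K b)), fhom K (Kinv a b h) = h)
  (Kinj : forall a b (f g : hom a b), fhom K f = fhom K g -> f = g)
  (F0 : ob G -> ob E) (psi : forall x, hom x (fob K (F0 x))).

Definition Fd : MonFunData G E :=
  {| fob := F0;
     fhom := fun x y f => Kinv _ _ (psi y ∘ f ∘ inv (psi x));
     fmu := fun x y => Kinv _ _ (psi (tens x y) ∘ (inv (psi x) ⊗ inv (psi y)) ∘ inv (fmu K (F0 x) (F0 y)));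
     feta := Kinv _ _ (psi unit ∘ inv (feta K)) |}.

Lemma Kt {a a' b b' : ob E} (u : hom a b) (v : hom a' b') :
  fhom K (u ⊗ v) = fmu K b b' ∘ (fhom K u ⊗ fhom K v) ∘ inv (fmu K a a').
Proof. rewrite (fmu_nat HK), <- cA, invr, cidr. reflexivity. Qed.

Lemma Klu (a : ob E) : fhom K (lunit a) = lunit (fob K a) ∘ inv (feta K ⊗ idm _) ∘ inv (fmu K unit a).
Proof. rewrite <- (fmu_lunit HK a). norm. reflexivity. Qed.
Lemma Kru (a : ob E) : fhom K (runit a) = runit (fob K a) ∘ inv (idm _ ⊗ feta K) ∘ inv (fmu K a unit).
Proof. rewrite <- (fmu_runit HK a). norm. reflexivity. Qed.
Lemma Ka (a b c : ob E) : fhom K (assoc a b c) =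
  fmu K (tens a b) c ∘ (fmu K a b ⊗ idm _) ∘ assoc _ _ _ ∘ inv (idm _ ⊗ fmu K b c) ∘ inv (fmu K a (tens b c)).
Proof.
  rewrite <- (cidr (fhom K (assoc a b c))), <- (invr (fmu K a (tens b c) ∘ (idm _ ⊗ fmu K b c))), cA, (fmu_assoc HK).
  norm. reflexivity.
Qed.

Ltac kn := repeat (rewrite ?(fhom_comp HK), ?(fhom_id HK), ?Kt, ?KKinv); norm.

Lemma Fd_mon : is_monfun Fd.
Proof.
  split; intros; apply Kinj; simpl; kn; try reflexivity.
  - rewrite Ka. norm. rewrite (cA ((inv (psi x) ⊗ inv (psi y)) ⊗ inv (psi z))), <- anat. norm. reflexivity.
  - rewrite Klu. rewrite (cA (psi x) (lunit x)), <- lnat. norm. reflexivity.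
  - rewrite Kru. rewrite (cA (psi x) (runit x)), <- rnat. norm. reflexivity.
Qed.


Lemma equiv_of_ff : equiv2 G E.
Proof.
  exists (exist _ Fd Fd_mon), (exist _ K HK). simpl. split.
  - exists (fun x => inv (psi x)). split; [|split]; simpl; intros; kn; try reflexivity.

  - exists (fun a => Kinv _ _ (inv (psi (fob K a)))). split; [|split]; simpl; intros; apply Kinj; kn; try reflexivity.

Qed.

End Equiv.

Definition pick {X : Type} (H : inhabited X) : X := epsilon H (fun _ => True).

Section ThreeOne.
Context (G : TwoGroup) (S : MonFunData (discrete (pi0grp G)) G) (HS : is_monfun S)
  (th : forall p : pi0 G, cls G (fob S p) = p).

Definition Amod : GModule (pi0grp G).
Proof.
  refine {| mcar := hom (@unit G) unit; madd := fun a b => a ∘ b; mzero := idm unit; mopp := inv;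
            act := fun g a => trg (fob S g) a |}.
  - intros; apply cA.
  - intros; apply EH.
  - intros; apply cidr.
  - intros; apply invr.
  - intros; apply tri_comp.
  - intros. rewrite <- (tri_iso (feta S)). apply tri_unit.
  - intros. rewrite <- (tri_iso (fmu S g h)). apply tri_tens.
Defined.

Definition Kd : MonFunData (elem_data Amod) G :=
  @Build_MonFunData (elem_data Amod) G (fun g => fob S g)
     (fun g h (f : @hom (elem_data Amod) g h) => fhom S (snd f) ∘ Lr (fob S g) (fst f))
     (fun g h => fmu S g h) (feta S).

Lemma Kd_mon : is_monfun Kd.
Proof.
  split; simpl.
  - intros. rewrite L_id, cidr. apply (fhom_id HS x).
  - intros x y z [b E2] [a E1]; simpl. subst. simpl.
    rewrite !(fhom_id HS). rewrite !cidl. apply L_comp.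
  - intros x x' y y' [a E] [a' E']; simpl. subst. simpl.
    rewrite !(fhom_id HS).
    match goal with |- context [fhom S ?e] => rewrite (proof_irrelevance _ e eq_refl) end.
    rewrite (fhom_id HS), !cidl. rewrite <- L_nat, L_comp, <- !L_tens, tri_spec, <- L_slide, slide1.
    reflexivity.
  - intros. rewrite L_id, cidr. apply (fmu_assoc HS).
  - intros. rewrite L_id, cidr. apply (fmu_lunit HS).
  - intros. rewrite L_id, cidr. apply (fmu_runit HS).
Qed.

Definition Keq (a b : pi0 G) (h : hom (fob S a) (fob S b)) : a = b :=
  eq_trans (eq_sym (th a)) (eq_trans (cls_eq G _ _ (inhabits h)) (th b)).

Arguments Keq {a b} h.

Definition Kinvd (a b : pi0 G) (h : hom (fob S a) (fob S b)) : @hom (elem_data Amod) a b :=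
  (Linv (fob S a) (inv (fhom S (Keq h)) ∘ h), Keq h).

Lemma split_of_post : is_split G.
Proof.
  exists (pi0grp G), Amod.
  refine (@equiv_of_ff (elementary Amod) G Kd Kd_mon Kinvd _ _ (cls G)
    (fun x => inv (pick (cls_eq_inv (th (cls G x)))))).
  - intros a b h. simpl. rewrite L_Linv. apply invrK.
  - intros a b [u E] [u' E'] H. simpl in H.
    assert (E = E') by apply proof_irrelevance. subst E'.
    apply (elem_hom_ext Amod). simpl. apply canc_l in H. apply L_inj in H. exact H.
Qed.

End ThreeOne.

Lemma pi_disc {Gp : Group} {x y : gcar Gp} (a b : @hom (discrete_data Gp) x y) : a = b.
Proof. exact (proof_irrelevance (x = y) a b). Qed.

Section OneThree.
Context (G : TwoGroup) (Gp : Group) (A : GModule Gp)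
  (F : MonFunData G (elem_data A)) (HF : is_monfun F)
  (K : MonFunData (elem_data A) G) (HK : is_monfun K)
  (th1 : forall x : ob G, hom (fob K (fob F x)) x).

Definition phi (p : pi0 G) : gcar Gp := fob F (rep p).

Lemma F_iso {x y : ob G} : inhabited (hom x y) -> fob F x = fob F y.
Proof. intros [f]. exact (snd (fhom F f)). Qed.

Lemma phi_cls x : phi (cls G x) = fob F x.
Proof. unfold phi. apply F_iso. apply cls_eq_inv. apply cls_rep. Qed.

Lemma phi_mul p q : gmul Gp (phi p) (phi q) = phi (pi0_mul p q).
Proof.
  unfold pi0_mul. rewrite phi_cls. exact (snd (fmu F (rep p) (rep q))).
Qed.

Lemma phi_one : gone Gp = phi (pi0_one G).
Proof. unfold pi0_one. rewrite phi_cls. exact (snd (feta F)). Qed.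

Definition Dd : MonFunData (discrete (pi0grp G)) (elem_data A) :=
  @Build_MonFunData (discrete (pi0grp G)) (elem_data A) phi
    (fun p q (E : p = q) => (mzero A, f_equal phi E))
    (fun p q => (mzero A, phi_mul p q))
    (mzero A, phi_one).

Lemma Dd_mon : is_monfun Dd.
Proof.
  split; intros; apply (elem_hom_ext A); simpl;
    rewrite ?act0, ?madd0; reflexivity.
Qed.

Lemma post_of_split : postnikov_splits G.
Proof.
  exists (exist _ (comp_data Dd K) (@comp_monfun (discrete (pi0grp G)) (elementary A) G Dd K Dd_mon HK)).
  simpl. exists (fun p => eq_trans (cls_eq G _ _ (inhabits (th1 (rep p)))) (cls_rep p)).
  split; [|split]; intros; apply pi_disc.
Qed.

End OneThree.

Lemma in_class_of {G : TwoGroup} (y z : ob G) (p : pi0 G) :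
  cls G z = p -> inhabited (hom z y) -> in_class y p.
Proof. intros <- H. exact H. Qed.

Section ThreeTwo.
Context (G : TwoGroup) (S : MonFunData (discrete (pi0grp G)) G) (HS : is_monfun S)
  (th : forall p : pi0 G, cls G (fob S p) = p).

Lemma sel_ex (p : pi0 G) : exists x : {o : ob G & hom o (fob S p)}, p = pi0_one G -> projT1 x = unit.
Proof.
  destruct (classic (p = pi0_one G)) as [E|NE].
  - subst p. exists (existT (fun o => hom o (fob S (pi0_one G))) unit (feta S)). intros _. reflexivity.
  - exists (existT (fun o => hom o (fob S p)) (fob S p) (idm _)). intros E; contradiction.
Qed.

Definition sel p := proj1_sig (constructive_indefinite_description _ (sel_ex p)).
Definition ss p := projT1 (sel p).
Definition ph p : hom (ss p) (fob S p) := projT2 (sel p).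
Lemma ss_one : ss (pi0_one G) = unit.
Proof. unfold ss, sel. destruct constructive_indefinite_description as [x Hx]. simpl. apply Hx. reflexivity. Qed.

Definition mus p q : hom (tens (ss p) (ss q)) (ss (pi0_mul p q)) :=
  inv (ph (pi0_mul p q)) ∘ fmu S p q ∘ (ph p ⊗ ph q).

Lemma ph_transport (p q : pi0 G) (E : p = q) :
  @eq_hom G _ _ (f_equal ss E) = inv (ph q) ∘ fhom S E ∘ ph p.
Proof. destruct E. simpl. assert (H0 := fhom_id HS p). simpl in H0. rewrite H0, cidr, invl. reflexivity. Qed.

Lemma SA (p q r : pi0 G) : fhom S (pi0_mulA p q r) =
  fmu S (pi0_mul p q) r ∘ (fmu S p q ⊗ idm _) ∘ assoc _ _ _ ∘ inv (idm _ ⊗ fmu S q r) ∘ inv (fmu S p (pi0_mul q r)).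
Proof. exact (Ka S HS p q r). Qed.

Lemma sec_of_post : has_coherent_section G.
Proof.
  exists ss, mus. split; [|split].
  - intros p. apply (in_class_of _ (fob S p)); [apply th|]. exact (inhabits (inv (ph p))).
  - apply ss_one.
  - intros p q r. rewrite ph_transport. unfold mus. rewrite SA. norm. rewrite anat. norm. reflexivity.

Qed.

End ThreeTwo.

Ltac shh H := match type of H with ?g => idtac g end.

Lemma cls_of_in {G : TwoGroup} (y : ob G) (p : pi0 G) : in_class y p -> cls G y = p.
Proof.
  intros H. rewrite <- (cls_rep p) in H |- *. symmetry. apply cls_eq. exact H.
Qed.

Section TwoThree.
Context (G : TwoGroup) (s : pi0 G -> ob G)
  (mu : forall p q : pi0 G, hom (tens (s p) (s q)) (s (pi0_mul p q)))
  (Hin : forall p, in_class (s p) p) (Hs : s (cls G unit) = unit)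
  (Hc : forall p q r : pi0 G,
         comp (mu (pi0_mul p q) r) (comp (tensm (mu p q) (idm (s r))) (assoc (s p) (s q) (s r)))
         = comp (@eq_hom G _ _ (f_equal s (pi0_mulA p q r)))
             (comp (mu p (pi0_mul q r)) (tensm (idm (s p)) (mu q r)))).

Local Notation eqh E := (@eq_hom (tg_data G) _ _ E).

Lemma T1 p q q' (E : q = q') (E1 : s q = s q') :
  mu p q' ∘ (idm (s p) ⊗ eqh E1) = eqh (f_equal s (f_equal (pi0_mul p) E)) ∘ mu p q.
Proof. destruct E. simpl. rewrite eq_hom_id, tid, cidr, cidl. reflexivity. Qed.
Lemma T2 p p' q (E : p = p') (E1 : s p = s p') :
  mu p' q ∘ (eqh E1 ⊗ idm (s q)) = eqh (f_equal s (f_equal (fun t => pi0_mul t q) E)) ∘ mu p q.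
Proof. destruct E. simpl. rewrite eq_hom_id, tid, cidr, cidl. reflexivity. Qed.
Lemma invT {x y : ob G} (E : x = y) : inv (eqh E) = eqh (eq_sym E).
Proof. rewrite eq_hom_sym. reflexivity. Qed.

Local Notation e := (pi0_one G).
Local Notation U := (s (pi0_one G)).
Definition Tl p : hom (s (pi0_mul e p)) (s p) := eqh (f_equal s (pi0_mul1l p)).
Definition Tr p : hom (s (pi0_mul p e)) (s p) := eqh (f_equal s (pi0_mul1r p)).

Lemma eta_ex : exists eta : hom unit U, eta ⊗ idm U = inv (Tl e ∘ mu e e) ∘ lunit U.
Proof.
  apply (fullT U unit).
  - exact (inhabits (eqh Hs ∘ runit U)).
  - exact (inhabits (eqh Hs ∘ lunit U)).
Qed.
Definition eta : hom unit U := proj1_sig (constructive_indefinite_description _ eta_ex).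
Lemma Heta : eta ⊗ idm U = inv (Tl e ∘ mu e e) ∘ lunit U.
Proof. unfold eta. destruct constructive_indefinite_description. assumption. Qed.

Lemma step2 : mu e e ∘ (eta ⊗ eta) = inv (Tl e) ∘ (eta ∘ lunit unit).
Proof.
  rewrite <- (slide1 eta eta), cA, Heta. norm. rewrite lnat. reflexivity.
Qed.

Lemma slide_l {x y z w v : ob G} (f : hom x y) (g : hom w v) (h : hom z w) :
  f ⊗ (g ∘ h) = (idm y ⊗ g) ∘ (f ⊗ h).
Proof. rewrite tcm, cidl. reflexivity. Qed.

Lemma lu p : Tl p ∘ (mu e p ∘ (eta ⊗ idm (s p))) = lunit (s p).
Proof.
  assert (H3 := f_equal (fun h => h ∘ (eta ⊗ (eta ⊗ idm (s p)))) (Hc e e p)). simpl in H3.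
  rewrite <- !cA, anat in H3.
  rewrite (cA (mu e e ⊗ _)), tcm, cidl, step2, !tc1, <- !cA in H3.
  unfold Tl in H3. rewrite invT, (cA (mu _ p)), (T2 _ _ p (eq_sym (pi0_mul1l e))), <- !cA in H3.
  rewrite tcm, cidl in H3.
  rewrite <- (invlK (Tl p) (mu e p ∘ (eta ⊗ idm (s p)))) in H3.
  rewrite slide_l, (cA (mu _ (pi0_mul e p))) in H3. unfold Tl in H3.
  rewrite invT, (T1 _ _ _ (eq_sym (pi0_mul1l p))) in H3. fold (Tl p) in H3.
  rewrite <- (slide1 eta (Tl p ∘ _)), <- kelly1, <- !cA in H3.
  assert (H4 : mu e p ∘ ((eta ⊗ idm (s p)) ∘ lunit (tens unit (s p)))
             = mu e p ∘ ((eta ⊗ idm (s p)) ∘ (idm unit ⊗ (Tl p ∘ (mu e p ∘ (eta ⊗ idm (s p))))))).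
  { eapply canc_l. rewrite H3, cA. f_equal. apply eq_hom_comp. }
  rewrite !cA in H4. apply canc_l in H4.
  apply faithL. rewrite lunitI, H4, <- !cA. reflexivity.
Qed.
Lemma slide_r {x y z w v : ob G} (f : hom x y) (g : hom w v) (h : hom z w) :
  (g ∘ h) ⊗ f = (g ⊗ idm y) ∘ (h ⊗ f).
Proof. rewrite tcm, cidl. reflexivity. Qed.

Lemma ru p : Tr p ∘ (mu p e ∘ (idm (s p) ⊗ eta)) = runit (s p).
Proof.
  assert (H3 := f_equal (fun h => h ∘ (idm (s p) ⊗ (eta ⊗ eta))) (Hc p e e)). simpl in H3.
  rewrite <- !cA, anat in H3.
  rewrite (cA (mu p e ⊗ _)), tcm, cidl in H3.
  rewrite <- (invlK (Tr p) (mu p e ∘ (idm (s p) ⊗ eta))) in H3.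
  rewrite slide_r, <- !cA, (cA (mu _ e) (_ ⊗ idm U)) in H3. unfold Tr in H3.
  rewrite invT, (T2 _ _ e (eq_sym (pi0_mul1r p))) in H3. fold (Tr p) in H3.
  rewrite <- (slide2 (Tr p ∘ _) eta) in H3.
  rewrite (tcm (idm (s p)) (mu e e)), cidl, step2 in H3.
  rewrite slide_l, (cA (mu p _)) in H3. unfold Tl in H3.
  rewrite invT, (T1 _ _ _ (eq_sym (pi0_mul1l e))) in H3.
  rewrite tc2, <- !cA in H3.
  assert (H4 : mu p e ∘ ((idm (s p) ⊗ eta) ∘ ((Tr p ∘ (mu p e ∘ (idm (s p) ⊗ eta))) ⊗ idm unit ∘ assoc (s p) unit unit))
             = mu p e ∘ ((idm (s p) ⊗ eta) ∘ (idm (s p) ⊗ lunit unit))).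
  { eapply canc_l. rewrite H3, cA. f_equal. apply eq_hom_comp. }
  rewrite !(cA (mu p e)) in H4. apply canc_l in H4.
  rewrite <- tri in H4. apply canc_r in H4.
  apply faithR. rewrite H4. rewrite runitI. reflexivity.
Qed.

Definition Sd : MonFunData (discrete (pi0grp G)) G :=
  @Build_MonFunData (discrete (pi0grp G)) G s
    (fun p q (E : p = q) => eqh (f_equal s E)) mu eta.

Lemma Sd_mon : is_monfun Sd.
Proof.
  split; simpl.
  - intros; reflexivity.
  - intros x y z g f. destruct f, g. simpl. rewrite cidl. reflexivity.
  - intros x x' y y' f f'. destruct f, f'. simpl. rewrite eq_hom_id, tid, cidl, cidr. reflexivity.
  - intros. rewrite (Hc x y z). reflexivity.
  - intros. rewrite <- (lu x). reflexivity.
  - intros. rewrite <- (ru x). reflexivity.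
Qed.

End TwoThree.

Lemma pi_disc' {Gp : Group} {x y : gcar Gp} (a b : @hom (discrete_data Gp) x y) : a = b.
Proof. exact (proof_irrelevance (x = y) a b). Qed.

Lemma post_of_sec (G : TwoGroup) : has_coherent_section G -> postnikov_splits G.
Proof.
  intros [s [mu [Hin [Hs Hc]]]].
  exists (exist _ (Sd G s mu Hs) (Sd_mon G s mu Hs Hc)).
  exists (fun p => cls_of_in (s p) p (Hin p)).
  split; [|split]; intros; apply pi_disc'.
Qed.

Theorem theorem3p13 (G : TwoGroup) :
  (is_split G <-> has_coherent_section G) /\
  (has_coherent_section G <-> postnikov_splits G).
Proof.
  assert (S1 : is_split G -> postnikov_splits G).
  { intros [Gp [A [[F HF] [[K HK] [[th1 _] _]]]]].
    exact (post_of_split G Gp A F K HK th1). }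
  assert (S2 : postnikov_splits G -> is_split G).
  { intros [[S HS] [th _]]. exact (split_of_post G S HS th). }
  assert (S3 : postnikov_splits G -> has_coherent_section G).
  { intros [[S HS] [th _]]. exact (sec_of_post G S HS th). }
  assert (S4 := post_of_sec G).
  split; split; auto.
Qed.
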